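(* Let $G\in\mathfrak{R}H^\infty_{m\times p}$, $K\in\mathfrak{R}H^\infty_{m\times q}$ and $F\in\mathfrak{R}H^\infty_{m\times r}$ be given by $G(z)=D_1+zC(I_n-zA)^{-1}B_1$, $K(z)=D_2+zC(I_n-zA)^{-1}B_2$, $F(z)=D_3+zC(I_n-zA)^{-1}B_3$, where $[G\ K]=[D_1\ D_2]+zC(I_n-zA)^{-1}[B_1\ B_2]$ is a minimal realization with $A$ stable $n\times n$, $T_GT_G^*-T_KT_K^*\ge0$, and $P_3+P_2-P_1\ge0$, with $P_j$ the controllability Gramian of $\{A,B_j\}$. If \[ T_GT_G^*-T_KT_K^*-T_FT_F^*=W_{obs}(P_3+P_2-P_1)W_{obs}^*, \] then, with $\Lambda(z)=C(I_n-zA)^{-1}(P_3+P_2-P_1)^{1/2}$, \[ \lambda\bar z\,\Lambda(\lambda)\Lambda(z)^*+G(\lambda)G(z)^*=\Lambda(\lambda)\Lambda(z)^*+K(\lambda)K(z)^*+F(\lambda)F(z)^*\qquad(z,\lambda\in\mathbb{D}). \]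
   Context: $\mathbb{D}$ is the open unit disc; a stable matrix has all eigenvalues in $\mathbb{D}$. $\mathfrak{R}H^\infty_{k\times l}$: $k\times l$ rational matrix functions without poles in the closed unit disc. Minimal realization: observable and controllable. $\ell^2_+(\mathbb{C}^k)$: square summable $\mathbb{C}^k$-valued sequences indexed by $j\ge0$; $T_\Omega$: block lower triangular Toeplitz operator with $(i,j)$ block $\Omega_{i-j}$, $\Omega_j$ the Taylor coefficients. $W_{obs}=\operatorname{col}(CA^j)_{j\ge0}$, $P_j=\sum_{\nu\ge0}A^\nu B_jB_j^*(A^* )^\nu$. *)

(* Defs.v *)
From HB Require Import structures.
From mathcomp Require Import all_boot all_order all_algebra.
From mathcomp Require Import complex.
From mathcomp Require Import all_classical all_reals all_analysis.
Set Implicit Arguments. Unset Strict Implicit. Unset Printing Implicit Defensive.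
Import Order.TTheory GRing.Theory Num.Theory.
Import numFieldNormedType.Exports.
Local Open Scope ring_scope.

Section Defs.
Variable C : numClosedFieldType.

Definition adjmx (m n : nat) (M : 'M[C]_(m, n)) : 'M[C]_(n, m) :=
  map_mx (fun x => x^*) M^T.

Definition stable (n : nat) (A : 'M[C]_n) : Prop :=
  forall a : C, eigenvalue A a -> `|a| < 1.

Definition observable (m n : nat) (Cm : 'M[C]_(m, n)) (A : 'M[C]_n) : Prop :=
  forall x : 'cV[C]_n, (forall j : nat, Cm *m (A ^+ j) *m x = 0) -> x = 0.

Definition controllable (n p : nat) (A : 'M[C]_n) (B : 'M[C]_(n, p)) : Prop :=
  forall y : 'rV[C]_n, (forall j : nat, y *m (A ^+ j) *m B = 0) -> y = 0.

Definition transfer (m n p : nat) (D : 'M[C]_(m, p)) (Cm : 'M[C]_(m, n))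
  (A : 'M[C]_n) (B : 'M[C]_(n, p)) (z : C) : 'M[C]_(m, p) :=
  D + z *: (Cm *m invmx (1%:M - z *: A) *m B).

(* Taylor coefficients at 0 of D + z C (I - zA)^{-1} B :
   Omega_0 = D, Omega_k = C A^(k-1) B for k >= 1 *)
Definition taylor_coef (m n p : nat) (D : 'M[C]_(m, p)) (Cm : 'M[C]_(m, n))
  (A : 'M[C]_n) (B : 'M[C]_(n, p)) (k : nat) : 'M[C]_(m, p) :=
  if k is k'.+1 then Cm *m (A ^+ k') *m B else D.

(* (i,j) block of T_Omega T_Omega^*, where T_Omega is the block lower
   triangular Toeplitz operator with (i,k) block Omega_(i-k) (k <= i):
   sum_(k <= min i j) Omega_(i-k) Omega_(j-k)^H *)
Definition TTstar_block (m p : nat) (Om : nat -> 'M[C]_(m, p)) (i j : nat)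
  : 'M[C]_m :=
  \sum_(k < (minn i j).+1) Om (i - k)%N *m adjmx (Om (j - k)%N).

(* a block operator on l^2_+(C^m), given by its blocks, is positive
   semidefinite: <M x, x> >= 0 for every finitely supported x *)
Definition block_op_psd (m : nat) (M : nat -> nat -> 'M[C]_m) : Prop :=
  forall (N : nat) (x : nat -> 'cV[C]_m),
    0 <= (\sum_(i < N) \sum_(j < N) adjmx (x i) *m M i j *m x j) 0 0.

Definition psdmx (n : nat) (P : 'M[C]_n) : Prop :=
  adjmx P = P /\ forall x : 'cV[C]_n, 0 <= (adjmx x *m P *m x) 0 0.

Definition gramian_partial (n p : nat) (A : 'M[C]_n) (B : 'M[C]_(n, p)) (N : nat)
  : 'M[C]_n :=
  \sum_(nu < N) (A ^+ nu) *m B *m adjmx B *m adjmx (A ^+ nu).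

End Defs.

Definition is_gramian (R : realType) (n p : nat) (A : 'M[complex R]_n)
  (B : 'M[complex R]_(n, p)) (P : 'M[complex R]_n) : Prop :=
  forall i j : 'I_n, ((fun N => (gramian_partial A B N i j : (complex R)^o)) @ \oo --> (P i j : (complex R)^o))%classic.

(* Main.v *)
Require Import Defs.
From HB Require Import structures.
From mathcomp Require Import all_boot all_order all_algebra.
From mathcomp Require Import complex.
From mathcomp Require Import all_classical all_reals all_analysis.
From mathcomp Require Import ring.
Import Order.TTheory GRing.Theory Num.Theory.
Local Open Scope ring_scope.

Set Implicit Arguments. Unset Strict Implicit.
Section H.
Variable C : numClosedFieldType.

Lemma adjmxK m n (M : 'M[C]_(m, n)) : adjmx (adjmx M) = M.
Proof. by apply/matrixP => i j; rewrite !mxE conjCK. Qed.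

Lemma adjmxM m n k (M : 'M[C]_(m, n)) (N : 'M[C]_(n, k)) :
  adjmx (M *m N) = adjmx N *m adjmx M.
Proof.
apply/matrixP => i j; rewrite !mxE rmorph_sum; apply: eq_bigr => l _.
by rewrite !mxE rmorphM mulrC.
Qed.

Lemma adjmxD m n (M N : 'M[C]_(m, n)) : adjmx (M + N) = adjmx M + adjmx N.
Proof. by apply/matrixP => i j; rewrite !mxE rmorphD. Qed.

Lemma adjmxN m n (M : 'M[C]_(m, n)) : adjmx (- M) = - adjmx M.
Proof. by apply/matrixP => i j; rewrite !mxE rmorphN. Qed.

Lemma adjmxB m n (M N : 'M[C]_(m, n)) : adjmx (M - N) = adjmx M - adjmx N.
Proof. by rewrite adjmxD adjmxN. Qed.

Lemma adjmxZ m n a (M : 'M[C]_(m, n)) : adjmx (a *: M) = a^* *: adjmx M.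
Proof. by apply/matrixP => i j; rewrite !mxE rmorphM. Qed.

Lemma adjmx1 n : adjmx (1%:M : 'M[C]_n) = 1%:M.
Proof. by apply/matrixP => i j; rewrite !mxE rmorph_nat eq_sym. Qed.

Lemma exprSmx n (A : 'M[C]_n) k : A ^+ k.+1 = A ^+ k *m A.
Proof. by rewrite exprSr mulmxE. Qed.

Lemma adjmx_exprS n (A : 'M[C]_n) k : adjmx (A ^+ k.+1) = adjmx A *m adjmx (A ^+ k).
Proof. by rewrite exprSmx adjmxM. Qed.

Lemma expr0mx n (A : 'M[C]_n) : A ^+ 0 = 1%:M.
Proof. by rewrite expr0 idmxE. Qed.

Lemma adjmx_expr0 n (A : 'M[C]_n) : adjmx (A ^+ 0) = 1%:M.
Proof. by rewrite expr0 -idmxE adjmx1. Qed.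

Lemma obs0 m n k (Cm : 'M[C]_(m, n)) (A : 'M[C]_n) (Y : 'M[C]_(n, k)) :
  observable Cm A -> (forall j, Cm *m A ^+ j *m Y = 0) -> Y = 0.
Proof.
move=> hO hY; apply/matrixP => i l.
pose x : 'cV[C]_n := Y *m delta_mx l 0.
have h : forall j, Cm *m A ^+ j *m x = 0.
  by move=> j; rewrite /x mulmxA hY mul0mx.
have := hO x h; rewrite /x.
by move/(congr1 (fun M : 'cV[C]_n => M i 0)); rewrite -colE !mxE.
Qed.

Lemma unit_res n (A : 'M[C]_n) z : stable A -> `|z| < 1 -> (1%:M - z *: A) \in unitmx.
Proof.
move=> hA hz; rewrite unitmxE unitfE; apply/negP => /det0P [v v0 hv].
have hz0 : z != 0.
  by apply/eqP => z0; move: hv; rewrite z0 scale0r subr0 mulmx1 => hv; rewrite hv eqxx in v0.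
have : eigenvalue A z^-1.
  apply/eigenvalueP; exists v => //.
  move: hv; rewrite mulmxBr mulmx1 -scalemxAr => /eqP; rewrite subr_eq0 => /eqP hv.
  by rewrite {2}hv scalerA mulVf // scale1r.
by move/hA; rewrite normfV invf_lt1 ?normr_gt0 // => /(lt_trans hz); rewrite ltxx.
Qed.

Lemma eq_obs m n k (Cm : 'M[C]_(m, n)) (A : 'M[C]_n) (Y1 Y2 : 'M[C]_(n, k)) :
  observable Cm A -> (forall j, Cm *m A ^+ j *m Y1 = Cm *m A ^+ j *m Y2) -> Y1 = Y2.
Proof.
move=> hO h; apply/eqP; rewrite -subr_eq0; apply/eqP; apply: (obs0 hO) => j.
by rewrite mulmxBr h subrr.
Qed.

Lemma rearrG m k (X T1 T2 T3 : 'M[C]_(m, k)) c :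
  c *: X - X + (T1 - T2 - T3) = 0 -> c *: X + T1 = X + T2 + T3.
Proof.
move=> h; apply/eqP; rewrite -subr_eq0.
have -> : c *: X + T1 - (X + T2 + T3) = c *: X - X + (T1 - T2 - T3).
  by apply/matrixP => i j; rewrite !mxE; ring.
by rewrite h.
Qed.

Lemma TT00 m p (Om : nat -> 'M[C]_(m, p)) : TTstar_block Om 0 0 = Om 0%N *m adjmx (Om 0%N).
Proof. by rewrite /TTstar_block big_ord1. Qed.

Lemma TTS0 m p (Om : nat -> 'M[C]_(m, p)) i : TTstar_block Om i.+1 0 = Om i.+1 *m adjmx (Om 0%N).
Proof. by rewrite /TTstar_block minn0 big_ord1 subn0. Qed.

Lemma TTSS m p (Om : nat -> 'M[C]_(m, p)) i j :
  TTstar_block Om i.+1 j.+1 = Om i.+1 *m adjmx (Om j.+1) + TTstar_block Om i j.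
Proof.
rewrite /TTstar_block minnSS big_ord_recl !subn0.
congr (_ + _).
Qed.

Lemma adjmx0 m n : adjmx (0 : 'M[C]_(m, n)) = 0.
Proof. by apply/matrixP => i j; rewrite !mxE rmorph0. Qed.

Lemma rearr m k (a b c d e f : 'M[C]_(m, k)) :
  (a + b) - (c + d) - (e + f) = (a - c - e) + (b - d - f).
Proof. by apply/matrixP => i j; rewrite !mxE; ring. Qed.

Lemma rearr4 m k (a1 b1 c1 d1 a2 b2 c2 d2 a3 b3 c3 d3 : 'M[C]_(m, k)) :
  (a1 + b1 + c1 + d1) - (a2 + b2 + c2 + d2) - (a3 + b3 + c3 + d3)
  = (a1 - a2 - a3) + (b1 - b2 - b3) + (c1 - c2 - c3) + (d1 - d2 - d3).
Proof. by apply/matrixP => i j; rewrite !mxE; ring. Qed.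

Lemma core m p q r n
  (A : 'M[C]_n) (Cm : 'M[C]_(m, n))
  (B1 : 'M[C]_(n, p)) (B2 : 'M[C]_(n, q)) (B3 : 'M[C]_(n, r))
  (D1 : 'M[C]_(m, p)) (D2 : 'M[C]_(m, q)) (D3 : 'M[C]_(m, r))
  (PP Q : 'M[C]_n) :
  stable A -> observable Cm A -> adjmx PP = PP -> adjmx Q = Q -> Q *m Q = PP ->
  (forall i j : nat,
     TTstar_block (taylor_coef D1 Cm A B1) i j
     - TTstar_block (taylor_coef D2 Cm A B2) i j
     - TTstar_block (taylor_coef D3 Cm A B3) i j
     = Cm *m A ^+ i *m PP *m adjmx (A ^+ j) *m adjmx Cm) ->
  forall z lambda : C, `|z| < 1 -> `|lambda| < 1 ->
    (lambda * z^*) *: ((Cm *m invmx (1%:M - lambda *: A) *m Q) *m adjmx (Cm *m invmx (1%:M - z *: A) *m Q))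
    + transfer D1 Cm A B1 lambda *m adjmx (transfer D1 Cm A B1 z)
    = (Cm *m invmx (1%:M - lambda *: A) *m Q) *m adjmx (Cm *m invmx (1%:M - z *: A) *m Q)
      + transfer D2 Cm A B2 lambda *m adjmx (transfer D2 Cm A B2 z)
      + transfer D3 Cm A B3 lambda *m adjmx (transfer D3 Cm A B3 z).
Proof.
move=> hA hO hPh hQh hQQ hT z lambda hz hl.
have hDD : D1 *m adjmx D1 - D2 *m adjmx D2 - D3 *m adjmx D3 = Cm *m PP *m adjmx Cm.
  by have := hT 0%N 0%N; rewrite !TT00 /= adjmx_expr0 expr0mx !mulmx1.
have hBD : B1 *m adjmx D1 - B2 *m adjmx D2 - B3 *m adjmx D3 = A *m PP *m adjmx Cm.
  apply: (eq_obs hO) => j.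
  have := hT j.+1 0%N; rewrite !TTS0 /= adjmx_expr0 mulmx1 exprSmx !mulmxA => h.
  by rewrite !mulmxBr !mulmxA h.
have hDB : D1 *m adjmx B1 - D2 *m adjmx B2 - D3 *m adjmx B3 = Cm *m PP *m adjmx A.
  by have := congr1 (fun M : 'M[C]_(n, m) => adjmx M) hBD; rewrite !adjmxB !adjmxM !adjmxK hPh mulmxA.
have hBB : B1 *m adjmx B1 - B2 *m adjmx B2 - B3 *m adjmx B3 = A *m PP *m adjmx A - PP.
  apply/eqP; rewrite -subr_eq0; apply/eqP.
  set X := (_ - (A *m PP *m adjmx A - PP)).
  have step : forall i j, Cm *m A ^+ i *m X *m adjmx (A ^+ j) *m adjmx Cm = 0.
    move=> i j; have h1 := hT i.+1 j.+1; have h0 := hT i j.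
    rewrite !TTSS rearr h0 in h1.
    have h2 := canRL (addrK _) h1.
    move: h2; rewrite /= !adjmxM exprSmx adjmx_exprS !mulmxA => h2.
    by rewrite /X !mulmxBr !mulmxBl !mulmxA h2 subrr.
  apply: (obs0 hO) => i.
  have h3 : Cm *m A ^+ i *m X = adjmx (adjmx (Cm *m A ^+ i *m X)) by rewrite adjmxK.
  rewrite h3 (obs0 hO (Y := adjmx (Cm *m A ^+ i *m X))) ?adjmx0 // => j.
  have := congr1 (fun M : 'M[C]_(m, m) => adjmx M) (step i j).
  by rewrite adjmxM adjmxK adjmxM adjmxK mulmxA adjmx0.
have hl1 := unit_res hA hl; have hz1 := unit_res hA hz.
pose U := Cm *m invmx (1%:M - lambda *: A).
pose V := adjmx (invmx (1%:M - z *: A)) *m adjmx Cm.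
have hCU : Cm = U *m (1%:M - lambda *: A) by rewrite /U -mulmxA mulVmx // mulmx1.
have hCV : adjmx Cm = (1%:M - z^* *: adjmx A) *m V.
  have e : Cm = Cm *m invmx (1%:M - z *: A) *m (1%:M - z *: A) by rewrite -mulmxA mulVmx // mulmx1.
  by rewrite {1}e !adjmxM adjmxB adjmx1 adjmxZ /V mulmxA.
have hLam : Cm *m invmx (1%:M - lambda *: A) *m Q *m adjmx (Cm *m invmx (1%:M - z *: A) *m Q)
    = U *m PP *m V by rewrite !adjmxM hQh -hQQ /U /V !mulmxA.
have texp : forall k (D : 'M[C]_(m, k)) (B : 'M[C]_(n, k)),
  transfer D Cm A B lambda *m adjmx (transfer D Cm A B z) =
  D *m adjmx D + z^* *: (D *m adjmx B *m V) + lambda *: (U *m (B *m adjmx D))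
  + (lambda * z^*) *: (U *m (B *m adjmx B) *m V).
  move=> k D B; rewrite /transfer adjmxD adjmxZ !adjmxM mulmxDl !mulmxDr -!scalemxAl -!scalemxAr scalerA /U /V !mulmxA.
  by rewrite !addrA.
rewrite hLam !texp; apply: rearrG.
rewrite rearr4 -!scalerBr -!mulmxBl -!mulmxBr hDD hDB hBD hBB.
clearbody U V.
rewrite hCV hCU.
rewrite !(mulmxBl, mulmxBr, mulmx1, mul1mx, mulmxA).
rewrite -!(scalemxAl, scalemxAr).
rewrite !(mulmxA, scalerBr, scalerA).
move: (U *m A *m PP *m adjmx A *m V) (U *m PP *m adjmx A *m V) (U *m A *m PP *m V) (U *m PP *m V) => X1 X2 X3 X4.
by apply/matrixP => i j; rewrite !mxE; ring.
Qed.
End H.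
Unset Implicit Arguments.

Theorem lemma4p1 (R : realType) (m p q r n : nat)
  (A : 'M[complex R]_n) (Cm : 'M[complex R]_(m, n))
  (B1 : 'M[complex R]_(n, p)) (B2 : 'M[complex R]_(n, q)) (B3 : 'M[complex R]_(n, r))
  (D1 : 'M[complex R]_(m, p)) (D2 : 'M[complex R]_(m, q)) (D3 : 'M[complex R]_(m, r))
  (P1 P2 P3 Q : 'M[complex R]_n) :
  stable A ->
  observable Cm A ->
  controllable A (row_mx B1 B2) ->
  is_gramian A B1 P1 -> is_gramian A B2 P2 -> is_gramian A B3 P3 ->
  block_op_psd (fun i j => TTstar_block (taylor_coef D1 Cm A B1) i j
                         - TTstar_block (taylor_coef D2 Cm A B2) i j) ->
  psdmx (P3 + P2 - P1) ->
  (* Q = (P3 + P2 - P1)^(1/2), the positive semidefinite square root *)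
  psdmx Q -> Q *m Q = P3 + P2 - P1 ->
  (forall i j : nat,
     TTstar_block (taylor_coef D1 Cm A B1) i j
     - TTstar_block (taylor_coef D2 Cm A B2) i j
     - TTstar_block (taylor_coef D3 Cm A B3) i j
     = Cm *m A ^+ i *m (P3 + P2 - P1) *m adjmx (A ^+ j) *m adjmx Cm) ->
  let Lambda := fun z : complex R => Cm *m invmx (1%:M - z *: A) *m Q in
  forall z lambda : complex R, `|z| < 1 -> `|lambda| < 1 ->
    (lambda * z^*) *: (Lambda lambda *m adjmx (Lambda z))
    + transfer D1 Cm A B1 lambda *m adjmx (transfer D1 Cm A B1 z)
    = Lambda lambda *m adjmx (Lambda z)
      + transfer D2 Cm A B2 lambda *m adjmx (transfer D2 Cm A B2 z)
      + transfer D3 Cm A B3 lambda *m adjmx (transfer D3 Cm A B3 z).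
Proof.
move=> hA hO _ _ _ _ _ hP hQ hQQ hT Lambda z lambda hz hl.
exact: (core hA hO (proj1 hP) (proj1 hQ) hQQ hT hz hl).
Qed.
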